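(* As $n\to\infty$, \[ 2\log s(n,2) \sim \log p(n,2) \sim \log m(n,2). \]
   Context: For integers $0\le r\le n$, $m(n,r)$ denotes the number of matroids of rank $r$ on the fixed ground set $[n]=\{1,\dots,n\}$, $p(n,r)$ the number of those that are paving, and $s(n,r)$ the number of those that are sparse paving. A matroid of rank $r$ is paving if every circuit has cardinality at least $r$; it is sparse paving if both it and its dual are paving (equivalently, every $r$-subset of the ground set is either a basis or a circuit-hyperplane). $\log$ denotes the logarithm to base $2$, and $f\sim g$ means $f/g\to 1$. *)

(* Defs.v *)
From mathcomp Require Import all_boot.
From Stdlib Require Import Reals.

Set Implicit Arguments.
Unset Strict Implicit.
Unset Printing Implicit Defensive.

Definition is_matroid_bases (n : nat) (B : {set {set 'I_n}}) : bool :=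
  (B != set0) &&
  [forall B1 in B, forall B2 in B, forall x in B1 :\: B2,
     exists y in B2 :\: B1, (y |: (B1 :\ x)) \in B].

Definition has_rank (n : nat) (B : {set {set 'I_n}}) (r : nat) : bool :=
  [forall b in B, #|b| == r].

Definition indep (n : nat) (B : {set {set 'I_n}}) (X : {set 'I_n}) : bool :=
  [exists b in B, X \subset b].

Definition circuit (n : nat) (B : {set {set 'I_n}}) (C : {set 'I_n}) : bool :=
  ~~ indep B C && [forall x in C, indep B (C :\ x)].

Definition paving (n : nat) (B : {set {set 'I_n}}) (r : nat) : bool :=
  [forall C, circuit B C ==> (r <= #|C|)].

Definition dual_bases (n : nat) (B : {set {set 'I_n}}) : {set {set 'I_n}} :=
  [set ~: b | b in B].

Definition sparse_paving (n : nat) (B : {set {set 'I_n}}) (r : nat) : bool :=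
  paving B r && paving (dual_bases B) (n - r).

Definition m_count (n r : nat) : nat :=
  #|[set B : {set {set 'I_n}} | is_matroid_bases B && has_rank B r]|.
Definition p_count (n r : nat) : nat :=
  #|[set B : {set {set 'I_n}} | [&& is_matroid_bases B, has_rank B r & paving B r]]|.
Definition s_count (n r : nat) : nat :=
  #|[set B : {set {set 'I_n}} |
      [&& is_matroid_bases B, has_rank B r & sparse_paving B r]]|.

Definition log2 (x : R) : R := (ln x / ln 2)%R.

(* Main.v *)
Require Import Defs.
From mathcomp Require Import all_boot zify.
Set Implicit Arguments.
Unset Strict Implicit.
Unset Printing Implicit Defensive.

Definition nonloop n (B : {set {set 'I_n}}) (x : 'I_n) : bool := [exists b in B, x \in b].
Definition par n (B : {set {set 'I_n}}) (x y : 'I_n) : bool :=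
  [&& nonloop B x, nonloop B y & [set x; y] \notin B].

Lemma rank_card n (B : {set {set 'I_n}}) b : has_rank B 2 -> b \in B -> #|b| = 2.
Proof. by move=> /forall_inP H /H /eqP. Qed.

Lemma set2_other n (b : {set 'I_n}) c : #|b| = 2 -> c \in b ->
  exists2 x, x != c & b = [set c; x].
Proof.
move=> /eqP /cards2P [u [v [uv ->]]] /set2P [->|->].
  by exists v; rewrite // eq_sym.
by exists u; rewrite // setUC.
Qed.

Lemma exch_key n (B : {set {set 'I_n}}) a b c :
  is_matroid_bases B -> has_rank B 2 -> [set a; b] \in B -> nonloop B c ->
  c != a -> c != b -> ([set c; a] \in B) || ([set c; b] \in B).
Proof.
move=> /andP [_ /forall_inP EX] HR Hab /exists_inP [b0 Hb0 cb0] ca cb.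
have [x xc E] := set2_other (rank_card HR Hb0) cb0.
case: (eqVneq x a) => [xa | xa]; first by rewrite -xa -E Hb0.
case: (eqVneq x b) => [xb | xb]; first by rewrite -xb -E Hb0 orbT.
have := EX _ Hb0 => /forall_inP /(_ _ Hab) /forall_inP /(_ x).
have xin : x \in b0 :\: [set a; b].
  by rewrite inE E !inE eqxx orbT !negb_or xa xb.
move=> /(_ xin) /exists_inP [y]; rewrite inE => /andP [yb0 yab].
have -> : b0 :\ x = [set c].
  by rewrite E setUC setU1K // inE.
rewrite setUC -/([set c; y]).
by case/set2P: yab => ->  ->; rewrite ?orbT.
Qed.

Lemma par_refl n (B : {set {set 'I_n}}) x : has_rank B 2 -> nonloop B x -> par B x x.
Proof.
move=> HR nx; rewrite /par nx /=; apply/negP => H.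
by have := rank_card HR H; rewrite setUid cards1.
Qed.

Lemma par_sym n (B : {set {set 'I_n}}) x y : par B x y = par B y x.
Proof. by rewrite /par setUC andbCA andbA. Qed.

Lemma par_trans n (B : {set {set 'I_n}}) x y z :
  is_matroid_bases B -> has_rank B 2 -> par B x y -> par B y z -> par B x z.
Proof.
move=> HM HR /and3P [nx ny pxy] /and3P [_ nz pyz].
rewrite /par nx nz /=.
case: (eqVneq x z) => [<-|xz].
  by apply/negP => H; have := rank_card HR H; rewrite setUid cards1.
case: (eqVneq y x) => [yx | yx]; first by rewrite -yx.
case: (eqVneq y z) => [yz | yz]; first by rewrite yz in pxy.
apply/negP => H.
have := exch_key HM HR H ny yx yz.
by rewrite setUC (negbTE pxy) (negbTE pyz).
Qed.

Definition fcode n (B : {set {set 'I_n}}) : {ffun 'I_n -> option 'I_n} :=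
  [ffun x => if nonloop B x then [pick z | par B x z] else None].

Lemma in_nonloop n (B : {set {set 'I_n}}) x y : [set x; y] \in B -> nonloop B x && nonloop B y.
Proof.
by move=> H; apply/andP; split; apply/exists_inP; exists [set x; y]; rewrite // !inE eqxx ?orbT.
Qed.

Lemma fcode_char n (B : {set {set 'I_n}}) x y :
  is_matroid_bases B -> has_rank B 2 ->
  ([set x; y] \in B) = [&& fcode B x != None, fcode B y != None & fcode B x != fcode B y].
Proof.
move=> HM HR.
have Hpick : forall u, nonloop B u -> exists2 z, fcode B u = Some z & par B u z.
  move=> u nu; rewrite ffunE nu.
  case: pickP => [z Hz | H]; first by exists z.
  by have := H u; rewrite par_refl.
have Heq : forall u v, par B u v -> fcode B u = fcode B v.
  move=> u v puv; move: (puv) => /and3P [nu nv _].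
  rewrite !ffunE nu nv; apply: eq_pick => z; apply/idP/idP => H.
    by apply: (par_trans HM HR _ H); rewrite par_sym.
  exact: (par_trans HM HR puv H).
case: (boolP (nonloop B x)) => nx; last first.
  rewrite ffunE (negbTE nx) /=; apply/negP => /in_nonloop.
  by rewrite (negbTE nx).
case: (boolP (nonloop B y)) => ny; last first.
  rewrite [fcode B y]ffunE (negbTE ny) /= andbF; apply/negP => /in_nonloop.
  by rewrite (negbTE ny) andbF.
have [zx Ex pxz] := Hpick _ nx.
have [zy Ey pyz] := Hpick _ ny.
rewrite Ex Ey /=.
apply/idP/idP.
  move=> H; apply/negP => /eqP [ez].
  have : par B x y.
    apply: (par_trans HM HR pxz); rewrite ez par_sym //.
  by rewrite /par H /= !andbF.
move=> Hne; apply: contraR Hne => Hn.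
have pxy : par B x y by rewrite /par nx ny Hn.
by have := Heq _ _ pxy; rewrite Ex Ey => ->; rewrite eqxx.
Qed.

Lemma memB2 n (B : {set {set 'I_n}}) X : has_rank B 2 ->
  (X \in B) = [exists x, exists y, (X == [set x; y]) && ([set x; y] \in B)].
Proof.
move=> HR; apply/idP/idP.
  move=> H; have /eqP /cards2P [x [y [_ E]]] := rank_card HR H.
  by apply/existsP; exists x; apply/existsP; exists y; rewrite -E H eqxx.
by move=> /existsP [x /existsP [y /andP [/eqP -> ->]]].
Qed.

Lemma fcode_inj n (B1 B2 : {set {set 'I_n}}) :
  is_matroid_bases B1 -> has_rank B1 2 -> is_matroid_bases B2 -> has_rank B2 2 ->
  fcode B1 = fcode B2 -> B1 = B2.
Proof.
move=> M1 R1 M2 R2 E; apply/setP => X.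
rewrite (memB2 X R1) (memB2 X R2).
apply: eq_existsb => x; apply: eq_existsb => y.
by rewrite !fcode_char // E.
Qed.

Lemma m_upper n : m_count n 2 <= n.+1 ^ n.
Proof.
rewrite /m_count.
set S := [set B : {set {set 'I_n}} | _].
rewrite -(@card_in_imset _ _ (@fcode n) S).
  by apply: leq_trans (max_card _) _; rewrite card_ffun card_option !card_ord.
move=> B1 B2; rewrite !inE => /andP [M1 R1] /andP [M2 R2].
exact: fcode_inj.
Qed.

Lemma dep_circuit n (B : {set {set 'I_n}}) D :
  ~~ indep B D -> exists2 C : {set 'I_n}, C \subset D & circuit B C.
Proof.
have : forall k (D : {set 'I_n}), #|D| < k -> ~~ indep B D -> exists2 C : {set 'I_n}, C \subset D & circuit B C.
  elim=> [|k IH] D0 // hk hD.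
  case: (boolP (circuit B D0)) => [hc|hc]; first by exists D0.
  move: hc; rewrite /circuit hD /= => /forall_inPn [x xD hx].
  have hk' : #|D0 :\ x| < k by move: hk; rewrite (cardsD1 x D0) xD.
  have [C hC cC] := IH _ hk' hx.
  by exists C => //; apply: subset_trans hC (subD1set _ _).
by move=> H; apply: (H #|D|.+1).
Qed.

Lemma paving_dep n (B : {set {set 'I_n}}) r D :
  paving B r -> ~~ indep B D -> r <= #|D|.
Proof.
move=> /forallP HP /dep_circuit [C hC cC].
have := HP C; rewrite cC /= => h.
exact: leq_trans h (subset_leq_card hC).
Qed.

Lemma paving_nonloop n (B : {set {set 'I_n}}) x : paving B 2 -> nonloop B x.
Proof.
move=> HP; apply: contraT => hx.
have : ~~ indep B [set x].
  apply/negP => /exists_inP [b hb]; rewrite sub1set => xb.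
  suff : nonloop B x by rewrite (negbTE hx).
  by apply/exists_inP; exists b.
by move/(paving_dep HP); rewrite cards1.
Qed.

Lemma dual_indep n (B : {set {set 'I_n}}) D :
  indep (dual_bases B) D = [exists b in B, D \subset ~: b].
Proof.
apply/exists_inP/exists_inP.
  by move=> [b0 /imsetP [b hb ->] hD]; exists b.
by move=> [b hb hD]; exists (~: b) => //; apply/imsetP; exists b.
Qed.

Lemma sparse_unique n (B : {set {set 'I_n}}) x y z :
  is_matroid_bases B -> has_rank B 2 -> sparse_paving B 2 ->
  par B x y -> par B x z -> x != y -> x != z -> y = z.
Proof.
move=> HM HR /andP [_ HD] pxy pxz xy xz.
apply/eqP/negPn/negP => yz.
set T := [set x; y; z].
have pT : forall u v, u \in T -> v \in T -> par B u v.
  have nx : nonloop B x by case/and3P: pxy.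
  have pyz : par B y z by apply: (par_trans HM HR _ pxz); rewrite par_sym.
  have H1 : forall u, u \in T -> par B x u.
    move=> u; rewrite !inE => /orP [/orP [] | ] /eqP -> //.
    exact: par_refl.
  move=> u v hu hv; apply: (par_trans HM HR _ (H1 _ hv)).
  by rewrite par_sym; apply: H1.
have hdep : ~~ indep (dual_bases B) (~: T).
  rewrite dual_indep; apply/negP => /exists_inP [b hb].
  rewrite setCS => hbT.
  have /eqP /cards2P [u [v [uv E]]] := rank_card HR hb.
  have hu : u \in T by apply: (subsetP hbT); rewrite E !inE eqxx.
  have hv : v \in T by apply: (subsetP hbT); rewrite E !inE eqxx orbT.
  by have := pT _ _ hu hv; rewrite /par -E hb !andbF.
have h1 := paving_dep HD hdep.
have h3 : 2 < #|T|.
  apply/card_gt2P; exists x, y, z; rewrite !inE !eqxx ?orbT; split => //.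
  by split => //; rewrite eq_sym.
have := cardsC T; rewrite card_ord => h2.
have h1' : n - 2 <= #|~: T| by exact: h1.
move: h1' h2 h3; lia.
Qed.

Definition spm n (B : {set {set 'I_n}}) :=
  [&& is_matroid_bases B, has_rank B 2 & sparse_paving B 2].
Definition sS n (B : {set {set 'I_n}}) := [set x : 'I_n | [exists y : 'I_n, (x < y) && par B x y]].
Definition sT n (B : {set {set 'I_n}}) := [set y : 'I_n | [exists x : 'I_n, (x < y) && par B x y]].
Definition nxt n (B : {set {set 'I_n}}) (x : 'I_n) := [pick y : 'I_n | (x < y) && par B x y].
Definition scode n (B : {set {set 'I_n}}) : {ffun 'I_n -> bool} * (n./2).-tuple (option 'I_n) :=
  ([ffun x => x \in sS B], [tuple nth None (map (@nxt n B) (enum (sS B))) i | i < n./2]).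

Lemma ltn_neqo n (x y : 'I_n) : x < y -> x != y.
Proof. by move=> h; apply/eqP => e; rewrite e ltnn in h. Qed.

Lemma nxt_par n (B : {set {set 'I_n}}) (x y : 'I_n) : spm B -> x < y -> par B x y -> nxt B x = Some y.
Proof.
move=> /and3P [HM HR HS] xy pxy; rewrite /nxt.
case: pickP => [y' /andP [h1 h2] | H]; last by have := H y; rewrite xy pxy.
congr Some; apply: (sparse_unique HM HR HS h2 pxy); exact: ltn_neqo.
Qed.

Lemma sS_spec n (B : {set {set 'I_n}}) (x : 'I_n) : spm B -> x \in sS B ->
  exists2 y : 'I_n, x < y & par B x y /\ nxt B x = Some y.
Proof.
move=> H; rewrite inE => /existsP [y /andP [h1 h2]].
by exists y => //; split => //; apply: nxt_par.
Qed.

Lemma sS_card n (B : {set {set 'I_n}}) : spm B -> #|sS B| <= n./2.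
Proof.
move=> H; move: (H) => /and3P [HM HR HS].
have hI : sS B :&: sT B = set0.
  apply/setP => x; rewrite in_setI in_set0; apply/negP => /andP [h1].
  rewrite inE => /existsP [w /andP [wx pwx]].
  have [y xy [pxy _]] := sS_spec H h1.
  rewrite par_sym in pwx.
  have := sparse_unique HM HR HS pxy pwx (ltn_neqo xy).
  have nw : x != w by rewrite eq_sym; apply: ltn_neqo.
  move=> /(_ nw) e.
  by move: xy wx; rewrite e; lia.
pose g (x : 'I_n) := odflt x (nxt B x).
have hST : #|sS B| <= #|sT B|.
  rewrite -(@card_in_imset _ _ g (sS B)).
    apply: subset_leq_card; apply/subsetP => z /imsetP [x hx ->].
    have [y xy [pxy e]] := sS_spec H hx.
    by rewrite /g e inE; apply/existsP; exists x; rewrite xy pxy.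
  move=> x1 x2 h1 h2; have [y1 l1 [p1 e1]] := sS_spec H h1.
  have [y2 l2 [p2 e2]] := sS_spec H h2.
  rewrite /g e1 e2 /= => e; rewrite -e in p2 l2.
  rewrite par_sym in p1; rewrite par_sym in p2.
  have n1 : y1 != x1 by rewrite eq_sym; apply: ltn_neqo.
  have n2 : y1 != x2 by rewrite eq_sym; apply: ltn_neqo.
  exact: sparse_unique HM HR HS p1 p2 n1 n2.
have hU := cardsUI (sS B) (sT B).
rewrite hI cards0 addn0 in hU.
have hmax : #|sS B :|: sT B| <= n by apply: leq_trans (max_card _) _; rewrite card_ord.
rewrite geq_half_double -addnn; lia.
Qed.

Lemma in_par n (B : {set {set 'I_n}}) (x y : 'I_n) : spm B -> x != y ->
  ([set x; y] \in B) = ~~ par B x y.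
Proof.
move=> /and3P [_ _ /andP [HP _]] xy.
by rewrite /par !paving_nonloop //= negbK.
Qed.

Lemma scode_par n (B1 B2 : {set {set 'I_n}}) (x y : 'I_n) :
  spm B1 -> spm B2 -> scode B1 = scode B2 -> x < y -> par B1 x y -> par B2 x y.
Proof.
move=> H1 H2 E xy p1.
have eS : sS B1 = sS B2.
  apply/setP => z; have := congr1 fst E => /ffunP /(_ z); by rewrite /= !ffunE.
have xS : x \in sS B1 by rewrite inE; apply/existsP; exists y; rewrite xy p1.
have e1 := nxt_par H1 xy p1.
have hi : index x (enum (sS B1)) < n./2.
  apply: leq_trans (sS_card H1); rewrite cardE index_mem mem_enum //.
have := congr1 snd E => /(congr1 (fun t => tnth t (Ordinal hi))); rewrite /= !tnth_mktuple /=.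
rewrite -eS !(nth_map x) ?index_mem ?mem_enum // nth_index ?mem_enum // e1.
rewrite /nxt; case: pickP => [z /andP [_ h] [->] // | _ //].
Qed.

Lemma scode_inj n (B1 B2 : {set {set 'I_n}}) :
  spm B1 -> spm B2 -> scode B1 = scode B2 -> B1 = B2.
Proof.
move=> H1 H2 E.
have hp : forall x y, par B1 x y = par B2 x y.
  move=> x y; case: (ltngtP x y) => h.
  - by apply/idP/idP; [apply: (scode_par H1 H2 E h) | apply: (scode_par H2 H1 (esym E) h)].
  - rewrite par_sym [par B2 _ _]par_sym.
    by apply/idP/idP; [apply: (scode_par H1 H2 E h) | apply: (scode_par H2 H1 (esym E) h)].
  - move: (H1) (H2) => /and3P [_ R1 /andP [P1 _]] /and3P [_ R2 /andP [P2 _]].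
    by rewrite (val_inj h) !par_refl // paving_nonloop.
move: (H1) (H2) => /and3P [_ R1 _] /and3P [_ R2 _].
apply/setP => X; rewrite (memB2 X R1) (memB2 X R2).
apply: eq_existsb => x; apply: eq_existsb => y.
case: (eqVneq x y) => [<-|xy].
  rewrite setUid.
  have h1 : [set x] \notin B1 by apply/negP => /(rank_card R1); rewrite cards1.
  have h2 : [set x] \notin B2 by apply/negP => /(rank_card R2); rewrite cards1.
  by rewrite (negbTE h1) (negbTE h2).
by rewrite !in_par // hp.
Qed.

Lemma s_upper n : s_count n 2 <= 2 ^ n * n.+1 ^ (n./2).
Proof.
rewrite /s_count.
set S := [set B : {set {set 'I_n}} | _].
rewrite -(@card_in_imset _ _ (@scode n) S).
  apply: leq_trans (max_card _) _.
  by rewrite card_prod card_ffun card_tuple card_option card_bool !card_ord.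
by move=> B1 B2; rewrite !inE; apply: scode_inj.
Qed.

Definition lab n (k : nat) (t : seq nat) (i : 'I_n) : nat :=
  if i < k then val i else nth (val i) t (i - k).
Definition Bc n (c : 'I_n -> nat) : {set {set 'I_n}} :=
  [set X | [exists x, exists y, (c x != c y) && (X == [set x; y])]].

Lemma Bc_mem n (c : 'I_n -> nat) x y : ([set x; y] \in Bc c) = (c x != c y).
Proof.
rewrite inE; apply/existsP/idP; last first.
  by move=> h; exists x; apply/existsP; exists y; rewrite h eqxx.
move=> [u /existsP [v /andP [cuv /eqP E]]].
have hx : x \in [set u; v] by rewrite -E !inE eqxx.
have hy : y \in [set u; v] by rewrite -E !inE eqxx orbT.
have hu : u \in [set x; y] by rewrite E !inE eqxx.
have hv : v \in [set x; y] by rewrite E !inE eqxx orbT.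
move: hu hv; case/set2P: hx => ->; case/set2P: hy => -> //.
- by move=> _; rewrite !inE => /orP [] /eqP e; rewrite e eqxx in cuv.
- by rewrite eq_sym.
- by rewrite !inE => /orP [] /eqP e; rewrite e eqxx in cuv.
Qed.

Lemma Bc_rank n (c : 'I_n -> nat) : has_rank (Bc c) 2.
Proof.
apply/forall_inP => X; rewrite inE => /existsP [x /existsP [y /andP [cxy /eqP ->]]].
have xy : x != y by apply: contraNneq cxy => ->.
by rewrite cards2 xy.
Qed.

Lemma Bc_exch n (c : 'I_n -> nat) a b u v : c a != c b -> c u != c v -> a \notin [set u; v] ->
  [exists y in [set u; v] :\: [set a; b], (y |: ([set a; b] :\ a)) \in Bc c].
Proof.
move=> cab cuv anu.
have ab : a != b by apply: contraNneq cab => ->.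
have -> : [set a; b] :\ a = [set b] by rewrite setU1K // inE.
apply/exists_inP.
case: (eqVneq (c u) (c b)) => [eub | nub].
  exists v; last by rewrite -/([set v; b]) Bc_mem -eub eq_sym.
  rewrite !inE eqxx orbT andbT negb_or.
  apply/andP; split.
    by apply: contraNneq anu => <-; rewrite !inE eqxx orbT.
  by apply: contraNneq cuv => ->; rewrite eub.
exists u; last by rewrite -/([set u; b]) Bc_mem.
rewrite !inE eqxx andbT negb_or; apply/andP; split.
  by apply: contraNneq anu => <-; rewrite !inE eqxx.
by apply: contraNneq nub => ->.
Qed.

Lemma Bc_matroid n (c : 'I_n -> nat) a b : c a != c b -> is_matroid_bases (Bc c).
Proof.
move=> cab; apply/andP; split.
  by apply/set0Pn; exists [set a; b]; rewrite Bc_mem.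
apply/forall_inP => B1; rewrite inE => /existsP [a1 /existsP [b1 /andP [c1 /eqP ->]]].
apply/forall_inP => B2; rewrite inE => /existsP [u /existsP [v /andP [c2 /eqP ->]]].
apply/forall_inP => x; rewrite inE => /andP [xn /set2P [ex|ex]]; rewrite ex in xn *.
  exact: Bc_exch.
have e : [set a1; b1] = [set b1; a1] by rewrite setUC.
rewrite e.
apply: Bc_exch => //; by rewrite eq_sym.
Qed.

Lemma paving2 n (B : {set {set 'I_n}}) : B != set0 -> (forall x, nonloop B x) -> paving B 2.
Proof.
move=> hB hN; apply/forallP => C; apply/implyP => /andP [hC _].
rewrite leqNgt; apply/negP => hlt.
move/negP: hC; apply.
have : (#|C| == 0) || (#|C| == 1) by move: hlt; case: #|C| => [|[|]].
case/orP => [/eqP /cards0_eq -> | /cards1P [x ->]].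
  by case/set0Pn: hB => b hb; apply/exists_inP; exists b => //; apply: sub0set.
by case/exists_inP: (hN x) => b hb xb; apply/exists_inP; exists b; rewrite // sub1set.
Qed.

Lemma dual_paving n (B : {set {set 'I_n}}) :
  (forall T : {set 'I_n}, 2 < #|T| -> exists2 b, b \in B & b \subset T) ->
  paving (dual_bases B) (n - 2).
Proof.
move=> H; apply/forallP => C; apply/implyP => /andP [hC _].
rewrite leqNgt; apply/negP => hlt.
have h2 : 2 < #|~: C|.
  have := cardsC C; rewrite card_ord => e.
  have hlt' : #|C| < n - 2 by exact: hlt.
  lia.
have [b hb sb] := H _ h2.
move/negP: hC; apply; rewrite dual_indep; apply/exists_inP; exists b => //.
by rewrite -setCS setCK.
Qed.

Lemma lab_same n k t (x y : 'I_n) : uniq t -> all (fun v => v < k) t ->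
  lab k t x = lab k t y -> x != y -> (x < k) != (y < k).
Proof.
move=> ut at_; rewrite /lab.
case: (ltnP x k) => hx; case: (ltnP y k) => hy //=.
  by move=> e; rewrite (val_inj e) eqxx.
have hs : forall (z : nat), z - k < size t -> nth z t (z - k) < k.
  by move=> z hz; rewrite (set_nth_default 0) //; apply: (all_nthP 0 at_).
case: (ltnP (x - k) (size t)) => h1; case: (ltnP (y - k) (size t)) => h2.
- rewrite !(set_nth_default 0) // => /eqP; rewrite nth_uniq // => /eqP e.
  have exy : x = y by apply: ord_inj; lia.
  by rewrite exy eqxx.
- rewrite (nth_default _ h2) => e _; have := hs _ h1; rewrite e; lia.
- rewrite (nth_default _ h1) => e _; have := hs _ h2; rewrite -e; lia.
- rewrite (nth_default _ h1) (nth_default _ h2) => e.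
  by rewrite (val_inj e) eqxx.
Qed.

Lemma lab_inj n k (t1 t2 : seq nat) : k + size t1 <= n -> size t1 = size t2 ->
  all (fun v => v < k) t1 -> all (fun v => v < k) t2 ->
  Bc (lab (n:=n) k t1) = Bc (lab (n:=n) k t2) -> t1 = t2.
Proof.
move=> hn hs a1 a2 E; apply: (eq_from_nth (x0:=0)) => // j hj.
apply/eqP/negPn/negP => ne.
have hx : k + j < n by lia.
have hj1 : nth 0 t1 j < k by apply: (all_nthP 0 a1).
have hy : nth 0 t1 j < n by lia.
have := Bc_mem (lab k t1) (Ordinal hx) (Ordinal hy); rewrite E Bc_mem /lab /=.
rewrite hj1 ltnNge leq_addr /= addKn !(set_nth_default 0) ?eqxx //; last by rewrite -hs.
by rewrite eq_sym ne.
Qed.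

Lemma lab_good n k t : 2 <= k -> k <= n ->
  [&& is_matroid_bases (Bc (lab (n:=n) k t)), has_rank (Bc (lab (n:=n) k t)) 2 &
      paving (Bc (lab (n:=n) k t)) 2].
Proof.
move=> hk hn.
have h0 : 0 < n by lia.
have h1 : 1 < n by lia.
have l0 : lab k t (Ordinal h0) = 0 by rewrite /lab /= ifT //; lia.
have l1 : lab k t (Ordinal h1) = 1 by rewrite /lab /= ifT //; lia.
have M : is_matroid_bases (Bc (lab (n:=n) k t)).
  by apply: (Bc_matroid (a:=Ordinal h0) (b:=Ordinal h1)); rewrite l0 l1.
rewrite M Bc_rank /=; apply: paving2; first by case/andP: M.
move=> x; rewrite /nonloop; case: (eqVneq (lab k t x) 0) => e.
  apply/exists_inP; exists [set x; Ordinal h1]; rewrite ?Bc_mem ?e ?l1 // !inE eqxx //.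
apply/exists_inP; exists [set x; Ordinal h0]; rewrite ?Bc_mem ?l0 // !inE eqxx //.
Qed.

Lemma p_lower n k : 2 <= k -> k <= n -> k ^ (n - k) <= p_count n 2.
Proof.
move=> hk hn.
pose F (g : (n - k).-tuple 'I_k) := Bc (lab (n:=n) k (map val g)).
have aall : forall g : (n - k).-tuple 'I_k, all (fun v => v < k) (map val g).
  by move=> g; apply/allP => v /mapP [w _ ->]; apply: ltn_ord.
have injF : injective F.
  move=> g1 g2 E; apply: val_inj; apply: (inj_map val_inj).
  apply: (lab_inj (n:=n) (k:=k) _ _ (aall g1) (aall g2) E).
  - rewrite size_map size_tuple; lia.
  - by rewrite !size_map !size_tuple.
rewrite -[k in k ^ _](card_ord k) -card_tuple -(card_imset _ injF).
apply: subset_leq_card; apply/subsetP => B /imsetP [g _ ->].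
by rewrite inE lab_good.
Qed.

Lemma p_le_m n : p_count n 2 <= m_count n 2.
Proof.
apply: subset_leq_card; apply/subsetP => B; rewrite !inE.
by case/and3P => -> ->.
Qed.

Lemma s_lower n h : 2 <= h -> h + h <= n -> h`! <= s_count n 2.
Proof.
move=> h2 hn.
pose t (f : {ffun 'I_h -> 'I_h}) := map (fun j => val (f j)) (enum 'I_h).
pose F f := Bc (lab (n:=n) h (t f)).
have aall : forall f, all (fun v => v < h) (t f).
  by move=> f; apply/allP => v /mapP [w _ ->]; apply: ltn_ord.
have injF : injective F.
  move=> f1 f2 E.
  have et : t f1 = t f2.
    apply: (lab_inj (n:=n) (k:=h) _ _ (aall f1) (aall f2) E).
    - rewrite size_map size_enum_ord; lia.
    - by rewrite !size_map.
  apply/ffunP => j; apply: val_inj.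
  by move/eq_in_map: et => /(_ j); apply; rewrite mem_enum.
have cD : #|[set f : {ffun 'I_h -> 'I_h} | injectiveb f]| = h`!.
  by rewrite card_inj_ffuns card_ord ffactnn.
rewrite -cD -(card_imset _ injF).
apply: subset_leq_card; apply/subsetP => B /imsetP [f]; rewrite inE => /injectiveP hf ->.
have hn' : h <= n by lia.
rewrite inE; have := lab_good (t f) h2 hn'; case/and3P => -> -> P /=.
rewrite /sparse_paving P /=; apply: dual_paving => T /card_gt2P [x [y [z [[hx hy hz] [xy yz zx]]]]].
have ut : uniq (t f).
  by rewrite map_inj_uniq ?enum_uniq // => a b /val_inj /hf.
have sub2 : forall u v, u \in T -> v \in T -> [set u; v] \subset T.
  by move=> u v hu hv; apply/subsetP => w; rewrite !inE => /orP [] /eqP ->.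
case: (eqVneq (lab h (t f) x) (lab h (t f) y)) => e1; last first.
  by exists [set x; y]; rewrite ?Bc_mem ?sub2.
case: (eqVneq (lab h (t f) y) (lab h (t f) z)) => e2; last first.
  by exists [set y; z]; rewrite ?Bc_mem ?sub2.
case: (eqVneq (lab h (t f) z) (lab h (t f) x)) => e3; last first.
  by exists [set z; x]; rewrite ?Bc_mem ?sub2.
have := lab_same ut (aall f) e1 xy.
have := lab_same ut (aall f) e2 yz.
have := lab_same ut (aall f) e3 zx.
by case: (x < h); case: (y < h); case: (z < h).
Qed.

Lemma fact_low m h : (m <= h)%nat -> (m ^ (h - m) <= h`!)%nat.
Proof.
elim: h => [|h IH] hm.
  by move: hm; rewrite leqn0 => /eqP ->.
case: (ltngtP m h.+1) => hm'.
- have hmh : (m <= h)%nat by lia.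
  rewrite subSn // expnS factS; apply: leq_mul; [lia | exact: IH].
- lia.
- by rewrite hm' subnn expn0 fact_gt0.
Qed.



From Stdlib Require Import Reals Lra Psatz.

Open Scope R_scope.

Lemma lnle x y : 0 < x -> x <= y -> ln x <= ln y.
Proof.
move=> hx hxy; case: (Rle_lt_or_eq_dec _ _ hxy) => h.
  by apply: Rlt_le; apply: ln_increasing.
by rewrite h; apply: Rle_refl.
Qed.

Lemma INR_leq (a b : nat) : (a <= b)%nat -> INR a <= INR b.
Proof. by move=> h; apply: le_INR; apply/leP. Qed.

Lemma INR_sub (a b : nat) : (b <= a)%nat -> INR (a - b)%nat = INR a - INR b.
Proof. by move=> h; apply: minus_INR; apply/leP. Qed.

Lemma INRpos (a : nat) : (0 < a)%nat -> 0 < INR a.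
Proof. by move=> h; apply: lt_0_INR; apply/ltP. Qed.

Lemma ln_nat_le (a b : nat) : (0 < a)%nat -> (a <= b)%nat -> ln (INR a) <= ln (INR b).
Proof. by move=> h1 h2; apply: lnle; [apply: INRpos | apply: INR_leq]. Qed.

Lemma ln_pow_nat (a e : nat) : (0 < a)%nat -> ln (INR (expn a e)) = INR e * ln (INR a).
Proof.
move=> h; have -> : INR (expn a e) = INR a ^ e.
  elim: e => [|e IH]; first by rewrite expn0.
  rewrite expnS; have -> : INR (muln a (expn a e)) = INR a * INR (expn a e) by exact: mult_INR.
  by rewrite IH.
by rewrite ln_pow //; apply: INRpos.
Qed.

Lemma ln_ge0 x : 1 <= x -> 0 <= ln x.
Proof. by move=> h; rewrite -ln_1; apply: lnle; lra. Qed.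

Lemma G (a M : nat) : (1 <= M)%nat -> (2 * M <= a)%nat ->
  INR a * (1 - / INR M) * (ln (INR a) - ln (2 * INR M)) <=
  INR (a - a %/ M)%nat * ln (INR (a %/ M)%nat).
Proof.
move=> hM ha.
set k := (a %/ M)%nat.
have h1 : (k * M <= a)%nat by apply: leq_divM.
have h2 : (a < k.+1 * M)%nat by apply: ltn_ceil; lia.
have r1 := INR_leq h1; rewrite (mult_INR k M) in r1.
have r2 := INR_leq h2; rewrite (mult_INR k.+1 M) !S_INR in r2.
have r3 := INR_leq ha; rewrite (mult_INR 2 M) /= in r3.
have rM : 1 <= INR M by have := INR_leq hM.
have hka : (k <= a)%nat by apply: leq_div.
rewrite INR_sub //.
have hk2 : INR a <= INR k * (2 * INR M) by nra.
have ha0 : 0 < INR a by lra.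
have hk0 : 0 < INR k by nra.
have hlnk : ln (INR a) - ln (2 * INR M) <= ln (INR k).
  have -> : ln (INR a) - ln (2 * INR M) = ln (INR a * / (2 * INR M)).
    have hi : 0 < / (2 * INR M) by apply: Rinv_0_lt_compat; lra.
    rewrite (ln_mult (INR a)) // ln_Rinv; lra.
  apply: lnle.
    by apply: Rmult_lt_0_compat => //; apply: Rinv_0_lt_compat; lra.
  apply: (Rmult_le_reg_r (2 * INR M)); first lra.
  rewrite Rmult_assoc Rinv_l; lra.
have hc0 : 0 <= ln (INR a) - ln (2 * INR M).
  by have := lnle (x := 2 * INR M) (y := INR a); lra.
have hf : INR a * (1 - / INR M) <= INR a - INR k.
  have : INR k <= INR a * / INR M.
    apply: (Rmult_le_reg_r (INR M)); first lra.
    rewrite Rmult_assoc Rinv_l; lra.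
  lra.
have hf0 : 0 <= INR a * (1 - / INR M).
  apply: Rmult_le_pos; first lra.
  have : / INR M <= 1 by rewrite -Rinv_1; apply: Rinv_le_contravar; lra.
  lra.
by apply: Rmult_le_compat.
Qed.

Open Scope R_scope.

Lemma p_pos n : (4 <= n)%nat -> (0 < p_count n 2)%nat.
Proof.
move=> hn; apply: leq_trans (p_lower (k:=2) _ _) => //; last lia.
by rewrite expn_gt0.
Qed.

Lemma s_pos n : (4 <= n)%nat -> (0 < s_count n 2)%nat.
Proof.
move=> hn; apply: leq_trans (s_lower (h:=2) _ _) => //; lia.
Qed.

Lemma lnm_up n : (4 <= n)%nat -> ln (INR (m_count n 2)) <= INR n * ln (INR n + 1).
Proof.
move=> hn.
have h0 : (0 < m_count n 2)%nat by apply: leq_trans (p_pos hn) (p_le_m n).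
apply: Rle_trans (ln_nat_le h0 (m_upper n)) _.
by rewrite ln_pow_nat // S_INR; apply: Rle_refl.
Qed.

Lemma lns_up n : (4 <= n)%nat ->
  ln (INR (s_count n 2)) <= INR n * ln 2 + INR (n./2) * ln (INR n + 1).
Proof.
move=> hn.
apply: Rle_trans (ln_nat_le (s_pos hn) (s_upper n)) _.
have e1 : INR (muln (expn 2 n) (expn n.+1 n./2)) = INR (expn 2 n) * INR (expn n.+1 n./2)
  by exact: mult_INR.
rewrite e1 ln_mult; last by apply: INRpos; rewrite expn_gt0.
  rewrite !ln_pow_nat // (S_INR n).
  replace (INR 2) with 2 by (simpl; lra); apply: Rle_refl.
by apply: INRpos; rewrite expn_gt0.
Qed.

Lemma lnp_low n k : (2 <= k)%nat -> (k <= n)%nat ->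
  INR (n - k)%nat * ln (INR k) <= ln (INR (p_count n 2)).
Proof.
move=> h1 h2; rewrite -ln_pow_nat; last lia.
apply: ln_nat_le; last exact: p_lower.
by rewrite expn_gt0; apply/orP; left; lia.
Qed.

Lemma lns_low n h m : (2 <= h)%nat -> (h + h <= n)%nat -> (1 <= m)%nat -> (m <= h)%nat ->
  INR (h - m)%nat * ln (INR m) <= ln (INR (s_count n 2)).
Proof.
move=> h1 h2 h3 h4; rewrite -ln_pow_nat //.
apply: ln_nat_le; first by rewrite expn_gt0 h3.
exact: leq_trans (fact_low h4) (s_lower h1 h2).
Qed.

Open Scope R_scope.
Lemma t1 d u L c N : 0 < d -> 0 <= u -> u < d/4 -> 0 <= c -> d * L >= 3 + 2 * c -> 0 < N ->
  (1 - d) * (N * L) <= N * (1 - u) * (L - c).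
Proof. intros. assert (0 < L) by nra.
assert (u * L <= d/4 * L) by nra.
assert (0 <= (1 - u) * (L - c) - (1 - d) * L) by nra.
nra. Qed.
Lemma t4 d u L c' N H A : 0 < d -> d <= 1/4 -> 0 <= u -> u < d/4 -> 0 <= c' -> d * L >= 3 + 2 * c' ->
  N * (d / 4) >= 1 -> (N - 1) / 2 <= H -> A >= L - c' ->
  (1 - d) * (N * L) / 2 <= H * (1 - u) * A.
Proof. intros. assert (0 < L) by nra. assert (1 <= N) by nra.
assert (0 <= L - c') by nra.
assert (h1 : H * (1 - u) * A >= H * (1 - u) * (L - c')).
{ apply Rle_ge, Rmult_le_compat_l; [apply Rmult_le_pos; lra | lra]. }
assert (h2 : H * (1 - u) * (L - c') >= (N - 1) / 2 * (1 - u) * (L - c')).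
{ apply Rle_ge, Rmult_le_compat_r; [lra|]. apply Rmult_le_compat_r; lra. }
assert (h3 : (N - 1) / 2 * (1 - u) * (L - c') >= N * (1 - d/4) / 2 * (1 - d/4) * (L - c')).
{ apply Rle_ge, Rmult_le_compat_r; [lra|]. apply Rmult_le_compat; try nra. }
assert (h4 : N * (1 - d/4) / 2 * (1 - d/4) * (L - c') >= N / 2 * ((1 - d/2) * (L - c'))).
{ assert (P : 0 <= N / 2 * (L - c') * (d * d / 16)) by (apply Rmult_le_pos; nra).
  replace (N * (1 - d/4) / 2 * (1 - d/4) * (L - c')) with (N / 2 * ((1 - d/2) * (L - c')) + N / 2 * (L - c') * (d * d / 16)) by field. lra. }
assert (h5 : (1 - d/2) * (L - c') >= (1 - d) * L) by nra.
nra. Qed.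
Lemma ratio d X P Mm S : 0 < d -> d <= 1/4 -> 0 < X -> (1-d)*X <= P -> P <= Mm -> Mm <= (1+d)*X ->
  (1-d)*X/2 <= S -> S <= (1+d)*X/2 -> Rabs (2*S/P - 1) < 4*d /\ Rabs (P/Mm - 1) < 4*d.
Proof.
intros. assert (0 < P) by nra. assert (0 < Mm) by nra.
split.
- set (q := 2*S/P). assert (E : q * P = 2 * S) by (unfold q; field; lra).
  apply Rabs_def1.
  + assert ((q - 1 - 4 * d) * P < 0) by nra. nra.
  + assert ((1 - q - 4 * d) * P < 0) by nra. nra.
- set (q := P/Mm). assert (E : q * Mm = P) by (unfold q; field; lra).
  apply Rabs_def1.
  + assert ((q - 1 - 4 * d) * Mm < 0) by nra. nra.
  + assert ((1 - q - 4 * d) * Mm < 0) by nra. nra.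
Qed.

Lemma ln2_lt1 : 0 < ln 2 < 1.
Proof.
split; first by rewrite -ln_1; apply: ln_increasing; lra.
rewrite -[X in _ < X](ln_exp 1); apply: ln_increasing; first lra.
have := exp_ineq1 1; lra.
Qed.

Lemma bounds d : 0 < d -> d <= 1/4 -> exists N : nat, forall n : nat, (N <= n)%nat ->
  0 < INR n * ln (INR n) /\
  (1 - d) * (INR n * ln (INR n)) <= ln (INR (p_count n 2)) /\
  ln (INR (p_count n 2)) <= ln (INR (m_count n 2)) /\
  ln (INR (m_count n 2)) <= (1 + d) * (INR n * ln (INR n)) /\
  (1 - d) * (INR n * ln (INR n)) / 2 <= ln (INR (s_count n 2)) /\
  ln (INR (s_count n 2)) <= (1 + d) * (INR n * ln (INR n)) / 2.
Proof.
move=> d0 d4.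
have [M hM] := INR_archimed (d/4) 1 ltac:(lra).
have M1 : (1 <= M)%nat.
  by case: M hM => [|M] //=; rewrite Rmult_0_l; lra.
have rM : 1 <= INR M by have := INR_leq M1.
set u := / INR M.
have hu0 : 0 <= u by apply: Rlt_le; apply: Rinv_0_lt_compat; lra.
have hu : u < d / 4.
  apply: (Rmult_lt_reg_r (INR M)); first lra.
  rewrite /u Rinv_l; lra.
set c := ln (2 * INR M).
have hc : 0 <= c by apply: ln_ge0; lra.
have h4 : 0 <= ln 4 by apply: ln_ge0; lra.
set c' := ln 4 + c.
set T := (3 + 2 * c') / d.
have [N1 hN1] := INR_archimed 1 (4 / d) ltac:(lra).
have [N2 hN2] := INR_archimed 1 (exp T) ltac:(lra).
exists (maxn (8 * M + 8) (maxn N1 N2)) => n.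
rewrite !geq_max => /and3P [hn8 hn1 hn2].
have rn1 := INR_leq hn1; have rn2 := INR_leq hn2.
have hnT : exp T < INR n by lra.
set L := ln (INR n).
have hLT : T < L by rewrite -[T]ln_exp; apply: ln_increasing => //; apply: exp_pos.
have hdL : d * L >= 3 + 2 * c'.
  have : d * T = 3 + 2 * c' by rewrite /T; field; lra.
  nra.
have hNd : INR n * (d / 4) >= 1.
  have : INR n > 4 / d by lra.
  move=> h; have : d * (4 / d) = 4 by field; lra.
  nra.
have hn4 : (4 <= n)%nat by lia.
have rn : 4 <= INR n by have := INR_leq hn4; rewrite /=; lra.
have hc' : 0 <= c' by rewrite /c'; lra.
have hL0 : 0 < L by nra.
have [ln2a ln2b] := ln2_lt1.
set k := (n %/ M)%nat.
have hk8 : (8 <= k)%nat.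
  rewrite /k; have <- : ((8 * M) %/ M = 8)%nat by rewrite mulnK.
  by apply: leq_div2r; lia.
have hkn : (k <= n)%nat by apply: leq_div.
have Pl1 := lnp_low (n:=n) (ltac:(lia) : (2 <= k)%nat) hkn.
have Pl2 := G M1 (ltac:(lia) : (2 * M <= n)%nat).
rewrite -/u -/c -/L -/k in Pl2.
have P1 : (1 - d) * (INR n * L) <= ln (INR (p_count n 2)).
  have hdc : d * L >= 3 + 2 * c by rewrite /c' in hdL; lra.
  have hn0 : 0 < INR n by lra.
  apply: Rle_trans (t1 d0 hu0 hu hc hdc hn0) _; lra.
have hln1 : ln (INR n + 1) <= L + 1.
  have : ln (INR n + 1) <= ln (2 * INR n) by apply: lnle; lra.
  rewrite ln_mult; [rewrite -/L; lra | lra | lra].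
have hln1' : 0 <= ln (INR n + 1) by apply: ln_ge0; lra.
have Mu := lnm_up hn4.
have Pm : ln (INR (p_count n 2)) <= ln (INR (m_count n 2)).
  by apply: ln_nat_le; [exact: p_pos | exact: p_le_m].
set h := (n./2)%nat.
have hh1 : (h + h <= n)%nat by rewrite addnn -geq_half_double.
have hh2 : (n <= (h + h).+1)%nat by rewrite addnn -leq_half_double.
have hh3 : (2 * M <= h)%nat by lia.
set m := (h %/ M)%nat.
have hm2 : (2 <= m)%nat.
  rewrite /m; have <- : ((2 * M) %/ M = 2)%nat by rewrite mulnK.
  by apply: leq_div2r.
have hmh : (m <= h)%nat by apply: leq_div.
have Sl1 := lns_low (ltac:(lia) : (2 <= h)%nat) hh1 (ltac:(lia) : (1 <= m)%nat) hmh.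
have Sl2 := G M1 hh3.
rewrite -/u -/c -/m in Sl2.
have rh1 := INR_leq hh1; have rh2 := INR_leq hh2.
rewrite plus_INR in rh1; rewrite S_INR plus_INR in rh2.
have hA : ln (INR h) - c >= L - c'.
  have : L <= ln (4 * INR h) by apply: lnle; lra.
  rewrite ln_mult; try lra.
  rewrite /c'; lra.
have S1 : (1 - d) * (INR n * L) / 2 <= ln (INR (s_count n 2)).
  have hH : (INR n - 1) / 2 <= INR h by lra.
  apply: Rle_trans (t4 d0 d4 hu0 hu hc' hdL hNd hH hA) _; lra.
have Su := lns_up hn4; rewrite -/h -/L in Su.
have S2 : ln (INR (s_count n 2)) <= (1 + d) * (INR n * L) / 2.
  have : INR h * ln (INR n + 1) <= INR n / 2 * (L + 1).
    apply: Rmult_le_compat => //; first by apply: pos_INR.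
    lra.
  have : INR n * ln 2 <= INR n by nra.
  nra.
split; first by nra.
split; first exact: P1.
split; first exact: Pm.
split.
  apply: Rle_trans Mu _.
  have : INR n * ln (INR n + 1) <= INR n * (L + 1) by apply: Rmult_le_compat_l; lra.
  nra.
by split.
Qed.

Lemma key_cv (eps : R) : eps > 0 -> exists N : nat, forall n : nat, (N <= n)%nat ->
  Rabs (2 * log2 (INR (s_count n 2)) / log2 (INR (p_count n 2)) - 1) < eps /\
  Rabs (log2 (INR (p_count n 2)) / log2 (INR (m_count n 2)) - 1) < eps.
Proof.
move=> he.
set d := Rmin (eps / 4) (1 / 4).
have hd0 : 0 < d by apply: Rmin_pos; lra.
have hd1 : d <= 1 / 4 by apply: Rmin_r.
have hd2 : 4 * d <= eps by have := Rmin_l (eps / 4) (1 / 4); rewrite -/d; lra.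
have [N HN] := bounds hd0 hd1.
exists N => n hn.
have [hX [h1 [h2 [h3 [h4 h5]]]]] := HN n hn.
have [r1 r2] := ratio hd0 hd1 hX h1 h2 h3 h4 h5.
have [l2a _] := ln2_lt1.
have hp : 0 < ln (INR (p_count n 2)) by nra.
have hm : 0 < ln (INR (m_count n 2)) by nra.
rewrite /log2.
have -> : 2 * (ln (INR (s_count n 2)) / ln 2) / (ln (INR (p_count n 2)) / ln 2) =
  2 * ln (INR (s_count n 2)) / ln (INR (p_count n 2)) by field; lra.
have -> : (ln (INR (p_count n 2)) / ln 2) / (ln (INR (m_count n 2)) / ln 2) =
  ln (INR (p_count n 2)) / ln (INR (m_count n 2)) by field; lra.
split; lra.
Qed.

Theorem theorem1p1 :
  Un_cv (fun n : nat => (2 * log2 (INR (s_count n 2)) / log2 (INR (p_count n 2)))%R) 1%R /\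
  Un_cv (fun n : nat => (log2 (INR (p_count n 2)) / log2 (INR (m_count n 2)))%R) 1%R.
Proof.
split=> eps he; have [N HN] := key_cv he; exists N => n hn;
  have := HN n (introT leP hn); rewrite /R_dist; case=> ? ?; assumption.
Qed.
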